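(* Let $m\ge 2$ be an integer, let $P_n^k\in\mathbb{R}^{m}$ be any fixed vector (linearization point), and let $i\in\{1,\dots,m\}$. For $P_n\in\mathbb{R}^m$ define the softmax component $R_{n,i}(P_n)=\exp(P_{n,i})/\sum_{j=1}^{m}\exp(P_{n,j})$ and $\mathrm{LSE}(P_n)=\ln\bigl(\sum_{j=1}^{m}\exp(P_{n,j})\bigr)$, and let $g^k=\exp(P_n^k)/\sum_{j=1}^m\exp(P^k_{n,j})\in\mathbb{R}^m$ (componentwise exponential). Define $$\overline{R}_{n,i}(P_n)=\exp\Bigl\{P_{n,i}-\mathrm{LSE}(P_n^k)-(g^k)^{\top}(P_n-P_n^k)\Bigr\},$$ $$\underline{R}_{n,i}(P_n)=1-\sum_{j\in\{1,\dots,m\}\setminus\{i\}}\exp(P_{n,j})\exp\Bigl\{-\mathrm{LSE}(P_n^k)-(g^k)^{\top}(P_n-P_n^k)\Bigr\}.$$ Let $\underline{r}_{n,i},\overline{r}_{n,i}\in\mathbb{R}$. Then the constraints $$\underline{r}_{n,i}\le \underline{R}_{n,i}(P_n),\qquad \overline{R}_{n,i}(P_n)\le \overline{r}_{n,i}$$ define a convex set of $P_n\in\mathbb{R}^m$; they are sufficient for $\underline{r}_{n,i}\le R_{n,i}(P_n)\le \overline{r}_{n,i}$; and they are necessary for $\underline{r}_{n,i}\le R_{n,i}(P_n^k)\le \overline{r}_{n,i}$, in the sense that if $\underline{r}_{n,i}\le R_{n,i}(P_n^k)\le \overline{r}_{n,i}$ then the constraints hold at $P_n=P_n^k$.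
   Context: Here $P_n$ is the $n$th row of a matrix $P\in\mathbb{R}^{m\times m}$ to which softmax is applied row-wise (in the paper $m=w+p$), and $P_n^k$ is the $n$th row of a linearization point $P^k$. *)

(* Defs.v *)
From HB Require Import structures.
From mathcomp Require Import all_boot all_order all_algebra.
From mathcomp Require Import all_classical all_reals all_analysis.
Set Implicit Arguments. Unset Strict Implicit. Unset Printing Implicit Defensive.
Import Order.TTheory GRing.Theory Num.Theory.
Local Open Scope ring_scope.

Section Softmax.
Context {R : realType} {m : nat}.

Definition softmax_comp (P : 'rV[R]_m) (i : 'I_m) : R :=
  expR (P 0 i) / \sum_(j < m) expR (P 0 j).

Definition LSE (P : 'rV[R]_m) : R := ln (\sum_(j < m) expR (P 0 j)).

Definition gk (Pk : 'rV[R]_m) : 'rV[R]_m :=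
  \row_(j < m) (expR (Pk 0 j) / \sum_(l < m) expR (Pk 0 l)).

Definition lin_term (Pk P : 'rV[R]_m) : R :=
  \sum_(j < m) gk Pk 0 j * (P 0 j - Pk 0 j).

Definition R_upper (Pk : 'rV[R]_m) (i : 'I_m) (P : 'rV[R]_m) : R :=
  expR (P 0 i - LSE Pk - lin_term Pk P).

Definition R_lower (Pk : 'rV[R]_m) (i : 'I_m) (P : 'rV[R]_m) : R :=
  1 - \sum_(j < m | j != i) expR (P 0 j) * expR (- LSE Pk - lin_term Pk P).

End Softmax.

(* Main.v *)
Require Import Defs.
From HB Require Import structures.
From mathcomp Require Import all_boot all_order all_algebra.
From mathcomp Require Import all_classical all_reals all_analysis.
From mathcomp Require Import ring lra.
Import Order.TTheory GRing.Theory Num.Theory.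
Local Open Scope ring_scope.
Local Open Scope convex_scope.

Section H.
Context {R : realType} {m : nat}.
Implicit Types (Pk P : 'rV[R]_m).

Definition SS P : R := \sum_(j < m) expR (P 0 j).
Definition EE Pk P : R := expR (- LSE Pk - lin_term Pk P).

Lemma SS_gt0 (hm : (0 < m)%N) P : 0 < SS P.
Proof.
rewrite /SS (bigD1 (Ordinal hm)) //=.
by rewrite ltr_pwDl ?expR_gt0 // sumr_ge0 // => j _; rewrite expR_ge0.
Qed.

Lemma upper_eq Pk i P : R_upper Pk i P = expR (P 0 i) * EE Pk P.
Proof. by rewrite /R_upper /EE -expRD; congr expR; lra. Qed.

Lemma lower_eq Pk i P :
  R_lower Pk i P = 1 - (\sum_(j < m | j != i) expR (P 0 j)) * EE Pk P.
Proof. by rewrite /R_lower mulr_suml. Qed.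

Lemma soft_eq (i : 'I_m) P :
  softmax_comp P i = 1 - (\sum_(j < m | j != i) expR (P 0 j)) * (SS P)^-1.
Proof.
have hm : (0 < m)%N by case: i => [k] /= /(leq_ltn_trans (leq0n k)).
have := SS_gt0 hm P; rewrite /softmax_comp /SS (bigD1 i) //= => h.
set a := expR _ in h *; set b := \sum_(_ < _ | _) _ in h *.
by field; rewrite gt_eqF.
Qed.

Lemma gk_sum Pk (hm : (0 < m)%N) : \sum_(j < m) gk Pk 0 j = 1.
Proof.
under eq_bigr do rewrite mxE.
by rewrite -mulr_suml divff // gt_eqF // (SS_gt0 hm).
Qed.

Lemma key Pk P (hm : (0 < m)%N) : 1 <= SS P * EE Pk P.
Proof.
set L := lin_term Pk P.
have Sk0 := SS_gt0 hm Pk.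
have -> : SS P * EE Pk P =
   \sum_(j < m) gk Pk 0 j * expR (P 0 j - Pk 0 j - L).
  rewrite /SS mulr_suml; apply: eq_bigr => j _.
  rewrite mxE /EE /LSE -/(SS Pk) !expRD !expRN lnK ?posrE //.
  have := expR_gt0 (Pk 0 j); move=> ?; field.
  by rewrite !gt_eqF ?expR_gt0.
apply: (@le_trans _ _ (\sum_(j < m) gk Pk 0 j * (1 + (P 0 j - Pk 0 j - L)))).
  rewrite (_ : \sum_(j < m) _ = \sum_(j < m) gk Pk 0 j + L - L * \sum_(j < m) gk Pk 0 j).
    by rewrite gk_sum //; lra.
  rewrite mulr_sumr /L /lin_term -big_split -sumrB /=; apply: eq_bigr => j _; ring.
apply: ler_sum => j _; apply: ler_wpM2l; last exact: expR_ge1Dx.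
by rewrite mxE divr_ge0 ?expR_ge0 // ltW.
Qed.

End H.

Lemma conv_entry (R : realType) (m : nat) (x y : convex_lmodType 'rV[R]_m)
  (t : {i01 R}) j :
  (x <| t |> y : 'rV[R]_m) 0 j = t%:num * x 0 j + (1 - t%:num) * y 0 j.
Proof. by rewrite /conv /= !mxE. Qed.

Lemma lin_conv (R : realType) (m : nat) (Pk : 'rV[R]_m)
  (x y : convex_lmodType 'rV[R]_m) (t : {i01 R}) :
  lin_term Pk (x <| t |> y) = t%:num * lin_term Pk x + (1 - t%:num) * lin_term Pk y.
Proof.
rewrite /lin_term !mulr_sumr -big_split /=; apply: eq_bigr => j _.
rewrite conv_entry; ring.
Qed.

Lemma expA_conv (R : realType) (m : nat) (Pk : 'rV[R]_m)
  (x y : convex_lmodType 'rV[R]_m) (t : {i01 R}) j :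
  expR ((x <| t |> y : 'rV[R]_m) 0 j - LSE Pk - lin_term Pk (x <| t |> y)) <=
  t%:num * expR (x 0 j - LSE Pk - lin_term Pk x)
  + (1 - t%:num) * expR (y 0 j - LSE Pk - lin_term Pk y).
Proof.
have := convex_expR t (x 0 j - LSE Pk - lin_term Pk x) (y 0 j - LSE Pk - lin_term Pk y).
rewrite !convRE conv_entry lin_conv.
apply: le_trans; rewrite le_eqVlt; apply/orP; left; apply/eqP; congr expR.
rewrite /unstable.onem; ring.
Qed.

Theorem theorem2 (R : realType) (m : nat) (hm : (2 <= m)%N)
    (Pk : 'rV[R]_m) (i : 'I_m) (r_lo r_up : R) :
  convex_set
    ([set P : convex_lmodType 'rV[R]_m |
       r_lo <= R_lower Pk i P /\ R_upper Pk i P <= r_up])%classic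
  /\ (forall P : 'rV[R]_m,
        r_lo <= R_lower Pk i P -> R_upper Pk i P <= r_up ->
        r_lo <= softmax_comp P i <= r_up)
  /\ (r_lo <= softmax_comp Pk i <= r_up ->
        r_lo <= R_lower Pk i Pk /\ R_upper Pk i Pk <= r_up).
Proof.
have hm0 : (0 < m)%N by apply: leq_trans hm.
split.
  move=> x y t; rewrite !in_setE => -[xl xu] [yl yu].
  have t0 : 0 <= t%:num by [].
  have t1 : t%:num <= 1 by [].
  have eA : forall (z : 'rV[R]_m) j,
      expR (z 0 j) * expR (- LSE Pk - lin_term Pk z)
      = expR (z 0 j - LSE Pk - lin_term Pk z).
    by move=> z j; rewrite -expRD; congr expR; ring.
  split.
    move: xl yl; rewrite /R_lower => xl yl.
    rewrite !(eq_bigr _ (fun j _ => eA _ j)) in xl yl *.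
    set sx := \sum_(_ < _ | _) _ in xl; set sy := \sum_(_ < _ | _) _ in yl.
    have : \sum_(j < m | j != i)
        expR ((x <| t |> y : 'rV[R]_m) 0 j - LSE Pk - lin_term Pk (x <| t |> y))
        <= t%:num * sx + (1 - t%:num) * sy.
      rewrite /sx /sy !mulr_sumr -big_split /=.
      by apply: ler_sum => j _; apply: expA_conv.
    nra.
  move: xu yu; rewrite /R_upper => xu yu.
  have h := @expA_conv _ _ Pk x y t i; nra.
have Es : forall P : 'rV[R]_m, (SS P)^-1 <= EE Pk P.
  move=> P; have h1 := key Pk P hm0; have h2 := SS_gt0 hm0 P.
  have h3 : SS P * (SS P)^-1 = 1 by rewrite divff // gt_eqF.
  nra.
split.
  move=> P hl hu; apply/andP; split.
    apply: le_trans hl _; rewrite lower_eq soft_eq lerD2l lerN2 ler_wpM2l //.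
    by rewrite sumr_ge0 // => j _; rewrite expR_ge0.
  apply: le_trans hu; rewrite upper_eq /softmax_comp ler_wpM2l ?expR_ge0 //.
  exact: Es.
have EPk : EE Pk Pk = (SS Pk)^-1.
  rewrite /EE (_ : lin_term Pk Pk = 0); last by rewrite /lin_term big1 // => j _; rewrite subrr mulr0.
  by rewrite subr0 expRN lnK // posrE (SS_gt0 hm0).
move=> /andP[hl hu]; split.
  by rewrite lower_eq EPk -soft_eq.
by rewrite upper_eq EPk.
Qed.
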